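(* Let $S_X,S_Y$ be finite nonempty action sets, $\lambda\in[0,1)$ and $\varphi:S_X\times S_Y\to\mathbb{R}$ additive. If $\varphi\equiv0$ is $\lambda$-enforceable by $X$, then $\varphi\equiv0$ is $\lambda$-enforceable by $X$ using a two-point reactive strategy, i.e., there exist $\tau_X^+,\tau_X^-\in\Delta(S_X)$, $p_0\in[0,1]$ and $p^*:S_Y\to[0,1]$ such that the strategy playing $p_0\tau_X^++(1-p_0)\tau_X^-$ in round $0$ and $p^*[s_Y]\tau_X^++(1-p^*[s_Y])\tau_X^-$ in round $t+1$ after $Y$ played $s_Y$ in round $t$ is $(\varphi,\lambda)$-autocratic.
   Context: Two players $X,Y$ play a repeated game with finite action sets $S_X,S_Y$; $\Delta(S)$ denotes the probability distributions on $S$. $\varphi$ is additive if $\varphi(s_X,s_Y)=\phi_X(s_X)+\phi_Y(s_Y)$ for some $\phi_X:S_X\to\mathbb{R}$, $\phi_Y:S_Y\to\mathbb{R}$. Histories: $\mathcal{H}=\bigcup_{T\ge0}(S_X\times S_Y)^T$; behavioral strategies are maps $\sigma:\mathcal{H}\to\Delta(S)$; players independently draw actions each round from their strategies evaluated at the history of realized action pairs, with $\mathbb{E}_{\sigma_X,\sigma_Y}$ the expectation over the resulting play. $\sigma_X$ is $(\varphi,\lambda)$-autocratic if for every behavioral strategy $\sigma_Y$ of $Y$, $\mathbb{E}_{\sigma_X,\sigma_Y}[(1-\lambda)\sum_{t\ge0}\lambda^t\varphi(s_X^t,s_Y^t)]=0$; $\varphi\equiv0$ is $\lambda$-enforceable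 by $X$ if such a behavioral strategy exists. *)

(* Defs.v *)
From mathcomp Require Import all_boot all_order all_algebra.
From mathcomp Require Import all_classical all_reals all_analysis.
Set Implicit Arguments. Unset Strict Implicit. Unset Printing Implicit Defensive.
Import Order.TTheory GRing.Theory Num.Theory.
Import numFieldNormedType.Exports.
Local Open Scope classical_set_scope.
Local Open Scope ring_scope.

Section RepeatedGame.
Variables (R : realType) (SX SY : finType).

Definition is_dist (S : finType) (d : {ffun S -> R}) : Prop :=
  (forall s, 0 <= d s) /\ \sum_(s : S) d s = 1.

Definition history := seq (SX * SY).

Definition strategy (S : finType) := history -> {ffun S -> R}.
Definition behavioral (S : finType) (sigma : strategy S) : Prop :=
  forall h, is_dist (sigma h).

Definition hist_prob (sX : strategy SX) (sY : strategy SY) (t : nat)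
  (h : t.-tuple (SX * SY)) : R :=
  \prod_(k < t) (sX (take k h) (tnth h k).1 * sY (take k h) (tnth h k).2).

Definition stage_exp (sX : strategy SX) (sY : strategy SY) (phi : SX * SY -> R)
  (t : nat) : R :=
  \sum_(h : t.-tuple (SX * SY))
     hist_prob sX sY h *
     \sum_(a : SX) \sum_(b : SY) sX h a * sY h b * phi (a, b).

Definition disc_partial (lam : R) (sX : strategy SX) (sY : strategy SY)
  (phi : SX * SY -> R) (n : nat) : R :=
  \sum_(t < n) (1 - lam) * lam ^+ t * stage_exp sX sY phi t.

Definition autocratic (phi : SX * SY -> R) (lam : R) (sX : strategy SX) : Prop :=
  forall sY : strategy SY, behavioral sY ->
    disc_partial lam sX sY phi @ \oo --> (0 : R).

Definition enforceable (phi : SX * SY -> R) (lam : R) : Prop :=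
  exists sX : strategy SX, behavioral sX /\ autocratic phi lam sX.

Definition additive_payoff (phi : SX * SY -> R) : Prop :=
  exists (phiX : SX -> R) (phiY : SY -> R),
    forall a b, phi (a, b) = phiX a + phiY b.

Definition mix (p : R) (tp tm : {ffun SX -> R}) : {ffun SX -> R} :=
  [ffun a => p * tp a + (1 - p) * tm a].

Definition reactive (tp tm : {ffun SX -> R}) (p0 : R) (pstar : SY -> R)
  : strategy SX :=
  fun h => match rev h with
           | [::] => mix p0 tp tm
           | x :: _ => mix (pstar x.2) tp tm
           end.

End RepeatedGame.

(* Main.v *)
Require Import Defs.
From mathcomp Require Import all_boot all_order all_algebra.
From mathcomp Require Import all_classical all_reals all_analysis.
From mathcomp Require Import ring lra.
Import Order.TTheory GRing.Theory Num.Theory.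
Import numFieldNormedType.Exports.
Local Open Scope ring_scope.

Section Aux.
Local Open Scope classical_set_scope.
Variable R : realType.

Lemma sum_tuple_rcons (T : finType) n (F : n.+1.-tuple T -> R) :
  \sum_(h : n.+1.-tuple T) F h =
  \sum_(h : n.-tuple T) \sum_(x : T) F [tuple of rcons h x].
Proof.
rewrite pair_big /=.
rewrite (reindex (fun p : n.-tuple T * T => [tuple of rcons p.1 p.2])) //=.
exists (fun h : n.+1.-tuple T =>
  ([tuple of belast (thead h) (behead h)], last (thead h) (behead h))).
- move=> [h x] _ /=.
  have E : rcons (belast (thead [tuple of rcons h x]) (behead [tuple of rcons h x]))
                 (last (thead [tuple of rcons h x]) (behead [tuple of rcons h x]))
           = rcons h x.
    by rewrite -lastI -[RHS]/(val [tuple of rcons h x]) [in RHS](tuple_eta [tuple of rcons h x]).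
  case/rcons_inj: E => E1 E2; congr pair; last by [].
  by apply: val_inj.
- move=> h _ /=; apply: val_inj => /=.
  by rewrite -lastI -[RHS]/(val h) [in RHS](tuple_eta h).
Qed.

Variables SX SY : finType.
Implicit Types (sX : strategy R SX SY SX) (sY : strategy R SX SY SY).

Lemma hist_prob_rcons sX sY t (h : t.-tuple (SX * SY)) x :
  hist_prob sX sY [tuple of rcons h x] = hist_prob sX sY h * (sX h x.1 * sY h x.2).
Proof.
rewrite /hist_prob big_ord_recr /=; congr (_ * _).
  apply: eq_bigr => k _.
  have Hk : (k < t)%N := ltn_ord k.
  have E1 : take k (rcons h x) = take k h.
    by rewrite -cats1 takel_cat // size_tuple ltnW.
  have E2 : tnth [tuple of rcons h x] (widen_ord (leqnSn t) k) = tnth h k.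
    by rewrite (tnth_nth x) (tnth_nth x) /= nth_rcons size_tuple Hk.
  by rewrite E1 E2.
have E1 : take t (rcons h x) = h.
  by rewrite -cats1 takel_cat ?size_tuple // -{1}(size_tuple h) take_size.
have E2 : tnth [tuple of rcons h x] ord_max = x.
  by rewrite (tnth_nth x) /= nth_rcons size_tuple ltnn eqxx.
by rewrite E1 E2.
Qed.

Lemma sum_hist_next sX sY t (G : seq (SX * SY) -> R) :
  \sum_(h : t.+1.-tuple (SX * SY)) hist_prob sX sY h * G h =
  \sum_(h : t.-tuple (SX * SY)) hist_prob sX sY h *
      \sum_(x : SX * SY) sX h x.1 * sY h x.2 * G (rcons h x).
Proof.
rewrite sum_tuple_rcons; apply: eq_bigr => h _.
rewrite mulr_sumr; apply: eq_bigr => x _.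
by rewrite hist_prob_rcons /= !mulrA.
Qed.

Lemma sum_prod_split sX sY (h : seq (SX * SY)) (f : SX -> SY -> R) :
  \sum_(x : SX * SY) sX h x.1 * sY h x.2 * f x.1 x.2 =
  \sum_(a : SX) \sum_(b : SY) sX h a * sY h b * f a b.
Proof. by rewrite -(pair_bigA _ (fun a b => sX h a * sY h b * f a b)). Qed.

Lemma hist_prob_ge0 sX sY t (h : t.-tuple (SX * SY)) :
  behavioral sX -> behavioral sY -> 0 <= hist_prob sX sY h.
Proof.
move=> bX bY; apply: prodr_ge0 => k _.
by apply: mulr_ge0; [case: (bX (take k h)) | case: (bY (take k h))].
Qed.

Lemma hist_prob_sum1 sX sY t :
  behavioral sX -> behavioral sY ->
  \sum_(h : t.-tuple (SX * SY)) hist_prob sX sY h = 1.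
Proof.
move=> bX bY; elim: t => [|t IH].
  rewrite (big_pred1 [tuple]) => [|h]; last by rewrite [h]tuple0 /= eqxx.
  by rewrite /hist_prob big_ord0.
rewrite -IH.
transitivity (\sum_(h : t.+1.-tuple (SX * SY)) hist_prob sX sY h * 1).
  by apply: eq_bigr => h _; rewrite mulr1.
rewrite (@sum_hist_next sX sY t (fun _ => 1)); apply: eq_bigr => h _.
rewrite (@sum_prod_split sX sY h (fun _ _ => 1)).
transitivity (hist_prob sX sY h * ((\sum_a sX h a) * (\sum_b sY h b))).
  congr (_ * _); rewrite mulr_suml; apply: eq_bigr => a _.
  by rewrite mulr_sumr; apply: eq_bigr => b _; rewrite mulr1.
by case: (bX h) => _ ->; case: (bY h) => _ ->; rewrite !mulr1.
Qed.


Lemma dist_bound (S : finType) (d : {ffun S -> R}) (f : S -> R) lo hi :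
  is_dist d -> (forall a, lo <= f a <= hi) ->
  lo <= \sum_a d a * f a <= hi.
Proof.
move=> [d0 d1] Hf; apply/andP; split.
  rewrite -[lo]mul1r -d1 mulr_suml; apply: ler_sum => a _.
  by apply: ler_wpM2l => //; case/andP: (Hf a).
rewrite -[hi]mul1r -d1 mulr_suml; apply: ler_sum => a _.
by apply: ler_wpM2l => //; case/andP: (Hf a).
Qed.

Lemma wsum_bound (I : finType) (P : I -> R) (v : I -> R) lo hi :
  (forall i, 0 <= P i) -> \sum_i P i = 1 -> (forall i, lo <= v i <= hi) ->
  lo <= \sum_i P i * v i <= hi.
Proof.
move=> P0 P1 Hv; apply/andP; split.
  rewrite -[lo]mul1r -P1 mulr_suml; apply: ler_sum => a _.
  by apply: ler_wpM2l => //; case/andP: (Hv a).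
rewrite -[hi]mul1r -P1 mulr_suml; apply: ler_sum => a _.
by apply: ler_wpM2l => //; case/andP: (Hv a).
Qed.

Lemma stage_exp_add sX sY (phi : SX * SY -> R) phiX phiY t :
  behavioral sX -> behavioral sY ->
  (forall a b, phi (a, b) = phiX a + phiY b) ->
  stage_exp sX sY phi t =
  \sum_(h : t.-tuple (SX * SY)) hist_prob sX sY h * (\sum_a sX h a * phiX a) +
  \sum_(h : t.-tuple (SX * SY)) hist_prob sX sY h * (\sum_b sY h b * phiY b).
Proof.
move=> bX bY Hphi; rewrite /stage_exp -big_split /=; apply: eq_bigr => h _.
rewrite -mulrDr; congr (_ * _).
case: (bX h) => _ SX1; case: (bY h) => _ SY1.
transitivity (\sum_a (sX h a * phiX a * \sum_b sY h b) +
              \sum_a (sX h a * \sum_b sY h b * phiY b)).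
  rewrite -big_split; apply: eq_bigr => a _ /=.
  rewrite mulr_sumr mulr_sumr -big_split; apply: eq_bigr => b _ /=.
  by rewrite Hphi; ring.
rewrite SY1 (eq_bigr (fun a => sX h a * phiX a)) => [|a _]; last by rewrite mulr1.
by rewrite -mulr_suml SX1 mul1r.
Qed.

Lemma geom_sum (lam : R) n :
  \sum_(t < n) (1 - lam) * lam ^+ t = 1 - lam ^+ n.
Proof.
elim: n => [|n IH]; first by rewrite big_ord0 expr0 subrr.
by rewrite big_ord_recr /= IH exprS; ring.
Qed.


Lemma mix_exp p (tp tm : {ffun SX -> R}) (f : SX -> R) :
  \sum_a mix p tp tm a * f a =
  p * (\sum_a tp a * f a) + (1 - p) * (\sum_a tm a * f a).
Proof.
rewrite !mulr_sumr -big_split; apply: eq_bigr => a _ /=.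
by rewrite /mix ffunE; ring.
Qed.

Lemma mix_dist p (tp tm : {ffun SX -> R}) :
  is_dist tp -> is_dist tm -> 0 <= p <= 1 -> is_dist (mix p tp tm).
Proof.
move=> [tp0 tp1] [tm0 tm1] /andP[p0 p1]; split.
  move=> a; rewrite /mix ffunE; apply: addr_ge0; apply: mulr_ge0 => //.
  by rewrite subr_ge0.
have E : \sum_a mix p tp tm a = p * \sum_a tp a + (1 - p) * \sum_a tm a.
  by rewrite /mix; under eq_bigr do rewrite ffunE; rewrite big_split /= -!mulr_sumr.
rewrite E tp1 tm1; ring.
Qed.

Lemma reactive_behavioral (tp tm : {ffun SX -> R}) p0 (pstar : SY -> R) :
  is_dist tp -> is_dist tm -> 0 <= p0 <= 1 -> (forall y, 0 <= pstar y <= 1) ->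
  behavioral (reactive tp tm p0 pstar).
Proof.
move=> dp dm hp hs h; rewrite /reactive.
by case: (rev h) => [|x _]; apply: mix_dist.
Qed.

Lemma sum_tuple0 (T : finType) (F : 0.-tuple T -> R) :
  \sum_(h : 0.-tuple T) F h = F [tuple].
Proof. by rewrite (big_pred1 [tuple]) => // h; rewrite [h]tuple0 /= eqxx. Qed.

Lemma sum_affine (I : finType) (w f : I -> R) c :
  \sum_i w i * (- f i - c) = - (\sum_i w i * f i) - c * \sum_i w i.
Proof.
rewrite mulr_sumr -!sumrN -big_split; apply: eq_bigr => i _ /=; ring.
Qed.

Lemma sufficiency (phi : SX * SY -> R) phiX phiY (lam : R)
  (tp tm : {ffun SX -> R}) p0 (pstar : SY -> R) :
  (forall a b, phi (a, b) = phiX a + phiY b) ->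
  0 <= lam -> lam < 1 ->
  is_dist tp -> is_dist tm -> 0 <= p0 <= 1 -> (forall y, 0 <= pstar y <= 1) ->
  (forall b, lam * (\sum_a mix (pstar b) tp tm a * phiX a) =
             - phiY b - (1 - lam) * (\sum_a mix p0 tp tm a * phiX a)) ->
  autocratic phi lam (reactive tp tm p0 pstar).
Proof.
move=> Hphi l0 l1 dp dm hp hs Hb sY bY.
set sX := reactive tp tm p0 pstar.
set x0 := \sum_a mix p0 tp tm a * phiX a.
have bX : behavioral sX by apply: reactive_behavioral.
pose Xt t := \sum_(h : t.-tuple (SX * SY)) hist_prob sX sY h * (\sum_a sX h a * phiX a).
pose Yt t := \sum_(h : t.-tuple (SX * SY)) hist_prob sX sY h * (\sum_b sY h b * phiY b).
have X0 : Xt 0%N = x0.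
  by rewrite /Xt sum_tuple0 /hist_prob big_ord0 mul1r.
have XS : forall t, lam * Xt t.+1 = - Yt t - (1 - lam) * x0.
  move=> t; rewrite /Xt (@sum_hist_next sX sY t (fun h => \sum_a sX h a * phiX a)).
  rewrite mulr_sumr.
  transitivity (\sum_(h : t.-tuple (SX * SY)) hist_prob sX sY h *
                 (- (\sum_b sY h b * phiY b) - (1 - lam) * x0)).
    apply: eq_bigr => h _.
    rewrite mulrCA; congr (_ * _).
    pose g := fun (a : SX) (b : SY) => lam * (\sum_a0 mix (pstar b) tp tm a0 * phiX a0).
    rewrite mulr_sumr (eq_bigr (fun x => sX h x.1 * sY h x.2 * g x.1 x.2)); last first.
      move=> x _.
      have -> : sX (rcons h x) = mix (pstar x.2) tp tm.
        by rewrite /sX /reactive rev_rcons.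
      by rewrite mulrCA.
    rewrite (@sum_prod_split sX sY h g) /g.
    - case: (bX h) => _ SX1.
      transitivity (\sum_a sX h a * \sum_b sY h b * (- phiY b - (1 - lam) * x0)).
        apply: eq_bigr => a _; rewrite mulr_sumr; apply: eq_bigr => b _.
        by rewrite Hb mulrA.
      rewrite -mulr_suml SX1 mul1r.
      case: (bY h) => _ SY1.
      transitivity (- (\sum_b sY h b * phiY b) - (1 - lam) * x0 * \sum_b sY h b).
        exact: sum_affine.
      by rewrite SY1 mulr1.
  transitivity (- Yt t - (1 - lam) * x0 * \sum_(h : t.-tuple (SX * SY)) hist_prob sX sY h).
    exact: sum_affine.
  by rewrite hist_prob_sum1 // mulr1.
have SE : forall t, stage_exp sX sY phi t = Xt t + Yt t.
  by move=> t; apply: stage_exp_add.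
have DP : forall n, disc_partial lam sX sY phi n.+1 = (1 - lam) * lam ^+ n * (x0 + Yt n).
  elim=> [|n IH].
    by rewrite /disc_partial big_ord_recr big_ord0 /= SE X0 add0r expr0.
  rewrite /disc_partial big_ord_recr /= -/(disc_partial lam sX sY phi n.+1) IH SE.
  rewrite exprS.
  have -> : (1 - lam) * (lam * lam ^+ n) * (Xt n.+1 + Yt n.+1) =
            (1 - lam) * lam ^+ n * (lam * Xt n.+1) + (1 - lam) * (lam * lam ^+ n) * Yt n.+1.
    by ring.
  rewrite XS; ring.
have [C HC] : exists C, forall n, `|Yt n| <= C.
  exists (\sum_b `|phiY b|) => n.
  have Hb' : forall b, - (\sum_b `|phiY b|) <= phiY b <= \sum_b `|phiY b|.
    move=> b; rewrite -ler_norml (bigD1 b) //= lerDl.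
    by apply: sumr_ge0 => i _; exact: normr_ge0.
  rewrite ler_norml; apply: wsum_bound.
  - by move=> h; exact: hist_prob_ge0.
  - exact: hist_prob_sum1.
  - by move=> h; apply: dist_bound => //; exact: bY.
rewrite -cvg_shiftS.
have -> : [sequence disc_partial lam sX sY phi n.+1]_n =
          (fun n => (1 - lam) * lam ^+ n * (x0 + Yt n)).
  by apply/funext => n; rewrite /= DP.
set K := (1 - lam) * (`|x0| + C).
have H0 : (fun n => K * lam ^+ n) @ \oo --> (0 : R).
  rewrite -(mulr0 K); apply: cvgMl_tmp; apply: cvg_expr.
  by rewrite ger0_norm.
apply: (@squeeze_cvgr _ _ _ _ (fun n => - (K * lam ^+ n)) (fun n => K * lam ^+ n)).
- apply: filterE => n.
  have a0 : 0 <= (1 - lam) * lam ^+ n by apply: mulr_ge0; [rewrite subr_ge0 ltW | apply: exprn_ge0].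
  have hxy : `|x0 + Yt n| <= `|x0| + C.
    by apply: le_trans (ler_normD _ _) _; rewrite lerD2l.
  have : `|(1 - lam) * lam ^+ n * (x0 + Yt n)| <= K * lam ^+ n.
    rewrite normrM (ger0_norm a0) /K.
    have -> : (1 - lam) * (`|x0| + C) * lam ^+ n = (1 - lam) * lam ^+ n * (`|x0| + C) by ring.
    by apply: ler_wpM2l.
  by rewrite ler_norml.
- by rewrite -oppr0; apply: cvgN.
- exact: H0.
Qed.


Lemma lim_lin (lam : R) c1 lo pb : 0 <= lam -> lam < 1 ->
  (fun n => c1 + lam * (1 - lam ^+ n) * lo + (1 - lam ^+ n.+1) * pb) @ \oo -->
  c1 + lam * lo + pb.
Proof.
move=> l0 l1.
have E0 : (fun n => lam ^+ n) @ \oo --> (0 : R).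
  by apply: cvg_expr; rewrite ger0_norm.
have E1 : (fun n => lam ^+ n.+1) @ \oo --> (0 : R).
  have -> : (fun n => lam ^+ n.+1) = (fun n => lam * lam ^+ n).
    by apply/funext => n; rewrite exprS.
  by rewrite -(mulr0 lam); apply: cvgMl_tmp.
have -> : c1 + lam * lo + pb = c1 + lam * (1 - 0) * lo + (1 - 0) * pb by rewrite !subr0 mulr1 mul1r.
apply: cvgD; first apply: cvgD.
- exact: cvg_cst.
- apply: cvgMr_tmp; apply: cvgMl_tmp; apply: cvgB; [exact: cvg_cst | exact: E0].
- apply: cvgMr_tmp; apply: cvgB; [exact: cvg_cst | exact: E1].
Qed.

Lemma necessity (phi : SX * SY -> R) phiX phiY (lam : R) sX lo hi :
  (forall a b, phi (a, b) = phiX a + phiY b) ->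
  0 <= lam -> lam < 1 -> behavioral sX -> autocratic phi lam sX ->
  (forall a, lo <= phiX a <= hi) ->
  forall b, lam * lo <= - phiY b - (1 - lam) * (\sum_a sX [::] a * phiX a) <= lam * hi.
Proof.
move=> Hphi l0 l1 bX aX Hlh b.
set x0 := \sum_a sX [::] a * phiX a.
pose sY : strategy R SX SY SY := fun _ => [ffun y => (y == b)%:R].
have Ey : forall (f : SY -> R), \sum_y [ffun y => (y == b)%:R] y * f y = f b.
  move=> f; rewrite (bigD1 b) //= ffunE eqxx mul1r big1 ?addr0 // => y /negbTE Hy.
  by rewrite ffunE Hy mul0r.
have bY : behavioral sY.
  move=> h; split; first by move=> y; rewrite ffunE ler0n.
  have := Ey (fun _ => 1); under eq_bigr do rewrite mulr1; by [].
pose Xt t := \sum_(h : t.-tuple (SX * SY)) hist_prob sX sY h * (\sum_a sX h a * phiX a).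
have X0 : Xt 0%N = x0.
  by rewrite /Xt sum_tuple0 /hist_prob big_ord0 mul1r.
have XB : forall t, lo <= Xt t <= hi.
  move=> t; apply: wsum_bound.
  - by move=> h; exact: hist_prob_ge0.
  - exact: hist_prob_sum1.
  - by move=> h; apply: dist_bound.
have SE : forall t, stage_exp sX sY phi t = Xt t + phiY b.
  move=> t; rewrite (@stage_exp_add sX sY phi phiX phiY t bX bY Hphi); congr (_ + _).
  under eq_bigr do rewrite Ey.
  by rewrite -mulr_suml hist_prob_sum1 // mul1r.
pose low (c : R) n := (1 - lam) * x0 + lam * (1 - lam ^+ n) * c + (1 - lam ^+ n.+1) * phiY b.
have Hstep : forall c n, low c n.+1 = low c n + (1 - lam) * lam ^+ n.+1 * (c + phiY b).
  by move=> c n; rewrite /low !exprS; ring.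
have D0 : forall c, disc_partial lam sX sY phi 1 = low c 0.
  by move=> c; rewrite /disc_partial big_ord_recr big_ord0 /= SE X0 /low !expr0; ring.
have Dlow : forall n, low lo n <= disc_partial lam sX sY phi n.+1.
  elim=> [|n IH]; first by rewrite (D0 lo).
  rewrite Hstep /disc_partial big_ord_recr /= -/(disc_partial lam sX sY phi n.+1) SE.
  apply: lerD => //; apply: ler_wpM2l.
    by apply: mulr_ge0; [rewrite subr_ge0 ltW | apply: exprn_ge0].
  by rewrite lerD2r; case/andP: (XB n.+1).
have Dup : forall n, disc_partial lam sX sY phi n.+1 <= low hi n.
  elim=> [|n IH]; first by rewrite (D0 hi).
  rewrite Hstep /disc_partial big_ord_recr /= -/(disc_partial lam sX sY phi n.+1) SE.
  apply: lerD => //; apply: ler_wpM2l.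
    by apply: mulr_ge0; [rewrite subr_ge0 ltW | apply: exprn_ge0].
  by rewrite lerD2r; case/andP: (XB n.+1).
have DC : (fun n => disc_partial lam sX sY phi n.+1) @ \oo --> (0 : R).
  by have := aX sY bY; rewrite -cvg_shiftS.
have L1 : (1 - lam) * x0 + lam * lo + phiY b <= 0.
  apply: (ler_cvg_to (lim_lin lam ((1 - lam) * x0) lo (phiY b) l0 l1) DC).
  by apply: filterE => n; exact: Dlow.
have L2 : 0 <= (1 - lam) * x0 + lam * hi + phiY b.
  apply: (ler_cvg_to DC (lim_lin lam ((1 - lam) * x0) hi (phiY b) l0 l1)).
  by apply: filterE => n; exact: Dup.
by apply/andP; split; lra.
Qed.

End Aux.

Lemma point_exp (R : realType) (S : finType) (a0 : S) (f : S -> R) :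
  \sum_a [ffun a => ((a == a0)%:R : R)] a * f a = f a0.
Proof.
rewrite (bigD1 a0) //= ffunE eqxx mul1r big1 ?addr0 // => y /negbTE Hy.
by rewrite ffunE Hy mul0r.
Qed.

Lemma point_dist (R : realType) (S : finType) (a0 : S) :
  is_dist [ffun a => ((a == a0)%:R : R)].
Proof.
split; first by move=> y; rewrite ffunE ler0n.
have := @point_exp R S a0 (fun _ => 1); under eq_bigr do rewrite mulr1; by [].
Qed.

Theorem corollary2 (R : realType) (SX SY : finType)
  (neX : (0 < #|SX|)%N) (neY : (0 < #|SY|)%N)
  (lam : R) (lam_ge0 : 0 <= lam) (lam_lt1 : lam < 1)
  (phi : SX * SY -> R) (add_phi : additive_payoff phi) :
  enforceable phi lam ->
  exists (tp tm : {ffun SX -> R}) (p0 : R) (pstar : SY -> R),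
    [/\ is_dist tp, is_dist tm, 0 <= p0 <= 1,
        (forall y, 0 <= pstar y <= 1) &
        autocratic phi lam (reactive tp tm p0 pstar)].
Proof.
case: add_phi => phiX [phiY Hphi] [sX [bX aX]].
case/card_gt0P: neX => a0 _.
set amin := [arg min_(a < a0) phiX a]%O.
set amax := [arg max_(a > a0) phiX a]%O.
set lo := phiX amin; set hi := phiX amax.
have Hlh : forall a, lo <= phiX a <= hi.
  move=> a; apply/andP; split.
    by rewrite /lo /amin; case: arg_minP => // i _ /(_ a isT).
  by rewrite /hi /amax; case: arg_maxP => // i _ /(_ a isT).
set x0 := \sum_a sX [::] a * phiX a.
have Hx0 : lo <= x0 <= hi by apply: dist_bound.
have Hn := @necessity R SX SY phi phiX phiY lam sX lo hi Hphi lam_ge0 lam_lt1 bX aX Hlh.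
rewrite -/x0 in Hn.
set v := fun b => - phiY b - (1 - lam) * x0.
pose tp : {ffun SX -> R} := [ffun a => ((a == amax)%:R : R)].
pose tm : {ffun SX -> R} := [ffun a => ((a == amin)%:R : R)].
have Emix : forall p, \sum_a mix p tp tm a * phiX a = p * hi + (1 - p) * lo.
  by move=> p; rewrite mix_exp !point_exp.
have lohi : lo <= hi by case/andP: (Hlh a0) => H1 H2; apply: le_trans H2.
pose p0 := if hi == lo then 0 else (x0 - lo) / (hi - lo).
pose pstar := fun b => if (hi == lo) || (lam == 0) then 0
                       else (v b / lam - lo) / (hi - lo).
have Hp0 : 0 <= p0 <= 1.
  rewrite /p0; case: eqP => [_|hne]; first by rewrite lexx ler01.
  have hl : 0 < hi - lo.
    rewrite subr_gt0 lt_neqAle lohi andbT; apply/eqP => E; apply: hne; rewrite E.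
    by [].
  case/andP: Hx0 => h1 h2.
  apply/andP; split; first by apply: divr_ge0; [rewrite subr_ge0 | exact: ltW].
  by rewrite ler_pdivrMr // mul1r lerD2r.
have Hps : forall b, 0 <= pstar b <= 1.
  move=> b; rewrite /pstar; case: ifP => [_|/norP [hne lne]]; first by rewrite lexx ler01.
  have hl : 0 < hi - lo.
    rewrite subr_gt0 lt_neqAle lohi andbT; apply/eqP => E; move/eqP: hne; apply; rewrite E.
    by [].
  have lp : 0 < lam by rewrite lt_def lne lam_ge0.
  have /andP [h1 h2] := Hn b.
  have h1' : lo <= v b / lam by rewrite ler_pdivlMr // mulrC.
  have h2' : v b / lam <= hi by rewrite ler_pdivrMr // mulrC.
  apply/andP; split; first by apply: divr_ge0; [rewrite subr_ge0 | exact: ltW].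
  by rewrite ler_pdivrMr // mul1r lerD2r.
have Ex0 : \sum_a mix p0 tp tm a * phiX a = x0.
  rewrite Emix /p0; case: eqP => [E|hne].
    case/andP: Hx0; rewrite E => h1 h2.
    rewrite mul0r add0r subr0 mul1r; apply/eqP; rewrite eq_le h1 h2 //.
  have hl : hi - lo != 0.
    by rewrite subr_eq0; apply/eqP.
  by field.
exists tp, tm, p0, pstar; split => //.
- exact: point_dist.
- exact: point_dist.
apply: (@sufficiency R SX SY phi phiX phiY lam tp tm p0 pstar Hphi lam_ge0 lam_lt1 (@point_dist R SX amax) (@point_dist R SX amin)) => //.
move=> b; rewrite Ex0 Emix /pstar -/(v b).
have /andP [h1 h2] := Hn b; rewrite -/(v b) in h1 h2.
case: ifP => [/orP [/eqP E | /eqP E] | /norP [hne lne]].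
- rewrite mul0r add0r subr0 mul1r; apply/eqP; rewrite eq_le h1 -E h2 //.
- rewrite E !mul0r in h1 h2 *; apply/eqP; rewrite eq_le h1 h2 //.
- have hl : hi - lo != 0 by rewrite subr_eq0.
  have ln : lam != 0 by rewrite lne.
  move: (v b) => w.
  have -> : (w / lam - lo) / (hi - lo) * hi + (1 - (w / lam - lo) / (hi - lo)) * lo = lo + (w / lam - lo) / (hi - lo) * (hi - lo) by ring.
  by rewrite divfK // addrC subrK mulrC divfK.
Qed.
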